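(* For $t\in\bar\tau_\delta=\{0,\delta,\dots,T\}$ let $v^t$ be the value function at time $t$ and $v_h^t$ its approximation given by the ideal max-plus finite element method. Then \[ \|v_h^T-v^T\|_\infty\leq\Big(1+\frac T\delta\Big)\sup_{t\in\bar\tau_\delta}\Big(\|P^{-\mathcal Z_h}(v^t)-v^t\|_\infty+\|P_{\mathcal W_h}(v^t)-v^t\|_\infty\Big). \]
   Context: Optimal control setting: $X\subseteq\mathbb{R}^n$, $U\subseteq\mathbb{R}^m$, $\ell:X\times U\to\mathbb R$, $f:X\times U\to\mathbb{R}^n$, $T>0$, $\phi:X\to\mathbb{R}\cup\{-\infty\}$. For $t\ge0$ and $g:X\to\overline{\mathbb R}$, $S^tg(x)=\sup\{\int_0^t\ell(\mathbf x(s),\mathbf u(s))ds+g(\mathbf x(t))\}$ over measurable $\mathbf u:[0,t]\to U$ and absolutely continuous $\mathbf x:[0,t]\to X$ with $\dot{\mathbf x}=f(\mathbf x,\mathbf u)$ a.e. and $\mathbf x(0)=x$; value function $v^t=S^t\phi$. Arithmetic in $\overline{\mathbb R}=\mathbb{R}\cup\{\pm\infty\}$ with $-\infty$ absorbing for $+$; $a\backslash b=\max\{\lambda\in\overline{\mathbb{R}}:a+\lambda\leq b\}$. $\langle u,v\rangle=\sup_{x\in X}(u(x)+v(x))$. Finite elements $w_1,\dots,w_p$ and test functions $z_1,\dots,z_q$, functions $X\to\mathbb{R}\cup\{-\infty\}$. $W_h\lambda=\sup_i(w_i+\lambda_i)$; $(W_h\backslash g)_i=\inf_{x\in X}(w_i(x)\backslash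 g(x))$; $P_{\mathcal W_h}g=W_h(W_h\backslash g)$; $P^{-\mathcal Z_h}g(x)=\min_j\big(z_j(x)\backslash\langle z_j,g\rangle\big)$. For a matrix $A$: $(A\lambda)_j=\max_k(A_{jk}+\lambda_k)$, $(A\backslash\mu)_i=\min_jA_{ji}\backslash\mu_j$. Ideal max-plus finite element method: $N\geq1$, $\delta=T/N$, $(M_h)_{ji}=\langle z_j,w_i\rangle$, $(K_h)_{ji}=\langle z_j,S^\delta w_i\rangle$, $\lambda^0=W_h\backslash\phi$, $\lambda^{t+\delta}=M_h\backslash(K_h\lambda^t)$, $v_h^t=W_h\lambda^t$. For $u,v:X\to\overline{\mathbb R}$, $\|u-v\|_\infty=\inf\{\lambda\geq0: v-\lambda\leq u\leq v+\lambda\}$ (equal to $\sup_x|u(x)-v(x)|$ when $u-v$ is finite-valued). *)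

(* Defs.v *)
From HB Require Import structures.
From mathcomp Require Import all_boot all_order all_algebra.
From mathcomp Require Import all_classical all_reals all_analysis.
Set Implicit Arguments. Unset Strict Implicit. Unset Printing Implicit Defensive.
Import Order.TTheory GRing.Theory Num.Theory.
Import numFieldNormedType.Exports.
Local Open Scope classical_set_scope.
Local Open Scope ring_scope.

Section MaxPlus.
Variable R : realType.

(* residuation a \ b = max { lambda in \bar R : a + lambda <= b }
   (with -oo absorbing for +, which is mathcomp's adde) *)
Definition resid (a b : \bar R) : \bar R := ereal_sup [set l | (a + l <= b)%E].

Definition abs_cont_on n (y : R -> 'rV[R]_n) (t : R) : Prop :=
  forall e : R, 0 < e -> exists2 d : R, 0 < d &
    forall (K : nat) (a b : nat -> R),
      (forall k, (k < K)%N -> 0 <= a k /\ a k <= b k /\ b k <= t) ->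
      (forall k, (k.+1 < K)%N -> b k <= a k.+1) ->
      \sum_(k < K) (b k - a k) < d ->
      \sum_(k < K) `|y (b k) - y (a k)| < e.

Definition admissible n m (X : set 'rV[R]_n) (U : set 'rV[R]_m)
  (ell : 'rV[R]_n -> 'rV[R]_m -> R) (f : 'rV[R]_n -> 'rV[R]_m -> 'rV[R]_n)
  (t : R) (x0 : 'rV[R]_n) (u : R -> 'rV[R]_m) (y : R -> 'rV[R]_n) : Prop :=
  (forall s, `[0, t]%classic s -> U (u s)) /\
  (forall i : 'I_m, measurable_fun `[0, t]%classic (fun s => u s ord0 i)) /\
  (forall s, `[0, t]%classic s -> X (y s)) /\
  abs_cont_on y t /\
  {ae @lebesgue_measure R, forall s, `]0, t[%classic s ->
      derivable y s 1 /\ 'D_1 y s = f (y s) (u s)} /\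
  y 0 = x0 /\
  measurable_fun `[0, t]%classic (fun s => ell (y s) (u s)).

Definition run_cost n m (ell : 'rV[R]_n -> 'rV[R]_m -> R) (t : R)
  (u : R -> 'rV[R]_m) (y : R -> 'rV[R]_n) : \bar R :=
  \int[@lebesgue_measure R]_(s in `[0, t]) (ell (y s) (u s))%:E.

Definition S n m (X : set 'rV[R]_n) (U : set 'rV[R]_m)
  (ell : 'rV[R]_n -> 'rV[R]_m -> R) (f : 'rV[R]_n -> 'rV[R]_m -> 'rV[R]_n)
  (t : R) (g : 'rV[R]_n -> \bar R) (x : 'rV[R]_n) : \bar R :=
  ereal_sup [set r | exists u y, admissible X U ell f t x u y /\
     r = (run_cost ell t u y + g (y t))%E].

Definition supnorm n (X : set 'rV[R]_n) (u v : 'rV[R]_n -> \bar R) : \bar R :=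
  ereal_inf [set l | (0 <= l)%E /\
     forall x, X x -> (v x - l <= u x)%E /\ (u x <= v x + l)%E].

Definition pairing n (X : set 'rV[R]_n) (u v : 'rV[R]_n -> \bar R) : \bar R :=
  ereal_sup [set (u x + v x)%E | x in X].

Definition Wop n p (w : 'I_p -> 'rV[R]_n -> \bar R) (lam : 'I_p -> \bar R)
  : 'rV[R]_n -> \bar R :=
  fun x => ereal_sup [set (w i x + lam i)%E | i in [set: 'I_p]].

Definition Wres n p (X : set 'rV[R]_n) (w : 'I_p -> 'rV[R]_n -> \bar R)
  (g : 'rV[R]_n -> \bar R) : 'I_p -> \bar R :=
  fun i => ereal_inf [set resid (w i x) (g x) | x in X].

Definition PW n p (X : set 'rV[R]_n) (w : 'I_p -> 'rV[R]_n -> \bar R)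
  (g : 'rV[R]_n -> \bar R) : 'rV[R]_n -> \bar R := Wop w (Wres X w g).

Definition PZ n q (X : set 'rV[R]_n) (z : 'I_q -> 'rV[R]_n -> \bar R)
  (g : 'rV[R]_n -> \bar R) : 'rV[R]_n -> \bar R :=
  fun x => ereal_inf [set resid (z j x) (pairing X (z j) g) | j in [set: 'I_q]].

Definition mxact q p (A : 'I_q -> 'I_p -> \bar R) (lam : 'I_p -> \bar R)
  : 'I_q -> \bar R :=
  fun j => ereal_sup [set (A j k + lam k)%E | k in [set: 'I_p]].

Definition mxres q p (A : 'I_q -> 'I_p -> \bar R) (mu : 'I_q -> \bar R)
  : 'I_p -> \bar R :=
  fun i => ereal_inf [set resid (A j i) (mu j) | j in [set: 'I_q]].

Fixpoint mpfem_coeffs n m p q (X : set 'rV[R]_n) (U : set 'rV[R]_m)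
  (ell : 'rV[R]_n -> 'rV[R]_m -> R) (f : 'rV[R]_n -> 'rV[R]_m -> 'rV[R]_n)
  (delta : R) (phi : 'rV[R]_n -> \bar R)
  (w : 'I_p -> 'rV[R]_n -> \bar R) (z : 'I_q -> 'rV[R]_n -> \bar R)
  (k : nat) : 'I_p -> \bar R :=
  match k with
  | O => Wres X w phi
  | k'.+1 =>
      let M := fun j i => pairing X (z j) (w i) in
      let Kh := fun j i => pairing X (z j) (S X U ell f delta (w i)) in
      mxres M (mxact Kh (mpfem_coeffs X U ell f delta phi w z k'))
  end.

End MaxPlus.

(* Main.v *)
Require Import Defs.
From HB Require Import structures.
From mathcomp Require Import all_boot all_order all_algebra.
From mathcomp Require Import all_classical all_reals all_analysis.
From mathcomp Require Import measurable_realfun.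
From mathcomp Require Import ring lra.
Import Order.TTheory GRing.Theory Num.Theory.
Local Open Scope classical_set_scope.
Local Open Scope ring_scope.

Module Aux.
Import numFieldNormedType.Exports.
Set Implicit Arguments. Unset Strict Implicit.
Section EAlg.
Context {R : realType}.
Local Open Scope ereal_scope.
Implicit Types (a b c l m : \bar R) (A : set \bar R).

Lemma supP A m : ereal_sup A <= m <-> (forall a, A a -> a <= m).
Proof.
split=> [H a Aa|H]; last exact: ge_ereal_sup.
exact: le_trans (ereal_sup_ubound Aa) H.
Qed.

Lemma infP A m : m <= ereal_inf A <-> (forall a, A a -> m <= a).
Proof.
split=> [H a Aa|H]; last exact: le_ereal_inf_tmp.
exact: le_trans H (ereal_inf_lbound Aa).
Qed.

Lemma supDP A c m : c + ereal_sup A <= m <-> (forall a, A a -> c + a <= m).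
Proof.
split=> [H a Aa|H].
  by apply: le_trans H; apply: leeD => //; exact: ereal_sup_ubound.
case: c H => [r| |] H.
- rewrite addeC -leeBrDr //; apply/supP => a Aa.
  by rewrite leeBrDr // addeC; exact: H.
- have [->|mfin] := eqVneq m +oo; first exact: leey.
  have : ereal_sup A <= -oo.
    apply/supP => a Aa; have := H a Aa.
    case: a {Aa} => [r| |] //=; rewrite ?addye ?leye_eq ?(negbTE mfin)//.
  by rewrite leeNy_eq => /eqP ->; rewrite addeNy leNye.
- by rewrite leNye.
Qed.

Lemma supDrP A c m : ereal_sup A + c <= m <-> (forall a, A a -> a + c <= m).
Proof.
rewrite addeC supDP; split=> H a Aa; [rewrite addeC|rewrite addeC]; exact: H.
Qed.

Lemma residP a b l : l <= resid a b <-> a + l <= b.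
Proof.
split=> [H|H]; last exact: ereal_sup_ubound.
apply: le_trans (leeD (lexx a) H) _.
by apply/supDP => x /=.
Qed.

Lemma eq_lb a b : (forall m, m <= a <-> m <= b) -> a = b.
Proof.
move=> H; apply/le_anti/andP; split; first by apply/H.
by apply/H.
Qed.

Lemma resid_ge a b : a + resid a b <= b.
Proof. by apply/residP. Qed.

End EAlg.

Section Ops.
Context {R : realType} {n mm p q : nat} (X : set 'rV[R]_n) (U : set 'rV[R]_mm)
  (ell : 'rV[R]_n -> 'rV[R]_mm -> R) (f : 'rV[R]_n -> 'rV[R]_mm -> 'rV[R]_n)
  (w : 'I_p -> 'rV[R]_n -> \bar R) (z : 'I_q -> 'rV[R]_n -> \bar R).
Local Open Scope ereal_scope.

Definition leX (g h : 'rV[R]_n -> \bar R) (l : R) :=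
  forall x, X x -> g x <= h x + l%:E.

Lemma sup_img_le (I : Type) (A : set I) (F G : I -> \bar R) (l : R) :
  (forall i, A i -> F i <= G i + l%:E) ->
  ereal_sup [set F i | i in A] <= ereal_sup [set G i | i in A] + l%:E.
Proof.
move=> H; apply/supP => _ [i Ai <-]; apply: le_trans (H i Ai) _.
by apply: leeD => //; apply: ereal_sup_ubound; exists i.
Qed.

Lemma inf_img_le (I : Type) (A : set I) (F G : I -> \bar R) (l : R) :
  (forall i, A i -> F i <= G i + l%:E) ->
  ereal_inf [set F i | i in A] <= ereal_inf [set G i | i in A] + l%:E.
Proof.
move=> H; rewrite -leeBlDr//; apply/infP => _ [i Ai <-].
rewrite leeBlDr//; apply: le_trans _ (H i Ai).
by apply: ereal_inf_lbound; exists i.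
Qed.

Lemma resid_le a b b' (l : R) : b <= b' + l%:E -> resid a b <= resid a b' + l%:E.
Proof.
move=> H; rewrite -leeBlDr//; apply/residP; rewrite addeA.
by rewrite leeBlDr//; apply: le_trans H; exact: resid_ge.
Qed.

Lemma S_le t g h (l : R) : (0 <= t)%R -> leX g h l ->
  forall x, S X U ell f t g x <= S X U ell f t h x + l%:E.
Proof.
move=> t0 H x; apply/supP => _ [u [y [adm ->]]].
have Xyt : X (y t).
  case: adm => _ [_ [HX _]]; apply: HX.
  by rewrite /= in_itv /= t0 lexx.
apply: (@le_trans _ _ (run_cost ell t u y + (h (y t) + l%:E))).
  by apply: leeD => //; exact: H.
rewrite addeA; apply: leeD => //; apply: ereal_sup_ubound.
by exists u, y.
Qed.

Lemma pairing_le (zz : 'rV[R]_n -> \bar R) g h (l : R) : leX g h l ->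
  pairing X zz g <= pairing X zz h + l%:E.
Proof.
move=> H; apply: sup_img_le => x Xx; rewrite -addeA; apply: leeD => //.
exact: H.
Qed.

Lemma PZ_le g h (l : R) : leX g h l -> forall x, PZ X z g x <= PZ X z h x + l%:E.
Proof.
move=> H x; apply: inf_img_le => j _; apply: resid_le; exact: pairing_le.
Qed.

Lemma Wres_le g h (l : R) : leX g h l -> forall i, Wres X w g i <= Wres X w h i + l%:E.
Proof.
move=> H i; apply: inf_img_le => x Xx; apply: resid_le; exact: H.
Qed.

Lemma Wop_le (la mu : 'I_p -> \bar R) (l : R) : (forall i, la i <= mu i + l%:E) ->
  forall x, Wop w la x <= Wop w mu x + l%:E.
Proof.
move=> H x; apply: sup_img_le => i _; rewrite -addeA; apply: leeD => //.
Qed.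

Lemma PW_le g h (l : R) : leX g h l -> forall x, PW X w g x <= PW X w h x + l%:E.
Proof. move=> H; apply: Wop_le; exact: Wres_le. Qed.

Definition close (g h : 'rV[R]_n -> \bar R) (l : R) := leX g h l /\ leX h g l.

Lemma supnorm_ge0 g h : 0 <= supnorm X g h.
Proof. by apply/infP => a [] . Qed.

Lemma supnorm_mem g h (l : R) : (0 <= l)%R -> close g h l -> supnorm X g h <= l%:E.
Proof.
move=> l0 [H1 H2]; apply: ereal_inf_lbound; split; first by rewrite lee_fin.
move=> x Xx; split; last exact: H1.
by rewrite leeBlDr//; exact: H2.
Qed.

Lemma supnorm_lt g h c : supnorm X g h < c ->
  exists l : R, [/\ (0 <= l)%R, l%:E < c & close g h l].
Proof.
move=> /ereal_inf_lt [y [y0 Hy] yc].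
have yfin : y \is a fin_num.
  by rewrite ge0_fin_numE //; apply: lt_le_trans yc (leey _).
exists (fine y); rewrite fineK //; split => //.
  by rewrite -lee_fin fineK.
split => x Xx; have [H1 H2] := Hy x Xx; rewrite fineK//.
by rewrite -leeBlDr.
Qed.

Lemma supnorm_le2 g1 h1 g2 h2 g h :
  (forall l1 l2, (0 <= l1)%R -> (0 <= l2)%R -> close g1 h1 l1 -> close g2 h2 l2 ->
     close g h (l1 + l2)) ->
  supnorm X g h <= supnorm X g1 h1 + supnorm X g2 h2.
Proof.
move=> H.
have s10 := supnorm_ge0 g1 h1; have s20 := supnorm_ge0 g2 h2.
have [s1y|] := eqVneq (supnorm X g1 h1) +oo.
  by rewrite s1y addye ?leey// gt_eqF// (lt_le_trans _ s20)// ltNyr.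
have [s2y|] := eqVneq (supnorm X g2 h2) +oo.
  by rewrite s2y addey ?leey// gt_eqF// (lt_le_trans _ s10)// ltNyr.
rewrite -ltey -ge0_fin_numE// => f1.
rewrite -ltey -ge0_fin_numE// => f2.
apply/lee_addgt0Pr => e e0.
have e20 : (0 < e / 2)%R by rewrite divr_gt0.
have [l1 [l10 l1lt c1]] : exists l : R, [/\ (0 <= l)%R, l%:E < supnorm X g1 h1 + (e/2)%:E & close g1 h1 l].
  by apply: supnorm_lt; rewrite lteDl.
have [l2 [l20 l2lt c2]] : exists l : R, [/\ (0 <= l)%R, l%:E < supnorm X g2 h2 + (e/2)%:E & close g2 h2 l].
  by apply: supnorm_lt; rewrite lteDl.
apply: le_trans (supnorm_mem _ (H _ _ l10 l20 c1 c2)) _; first exact: addr_ge0.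
rewrite EFinD; apply: le_trans (leeD (ltW l1lt) (ltW l2lt)) _.
rewrite addeACA -EFinD -splitr //.
Qed.

Lemma supnorm_le1 g1 h1 g h :
  (forall l, (0 <= l)%R -> close g1 h1 l -> close g h l) ->
  supnorm X g h <= supnorm X g1 h1.
Proof.
move=> H.
have s10 := supnorm_ge0 g1 h1.
have [s1y|] := eqVneq (supnorm X g1 h1) +oo; first by rewrite s1y leey.
rewrite -ltey -ge0_fin_numE// => f1.
apply/lee_addgt0Pr => e e0.
have [l1 [l10 l1lt c1]] : exists l : R, [/\ (0 <= l)%R, l%:E < supnorm X g1 h1 + e%:E & close g1 h1 l].
  by apply: supnorm_lt; rewrite lteDl.
exact: le_trans (supnorm_mem l10 (H _ l10 c1)) (ltW l1lt).
Qed.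

Lemma close_tri g h k (l1 l2 : R) : close g h l1 -> close h k l2 -> close g k (l1 + l2).
Proof.
move=> [a1 b1] [a2 b2]; split => x Xx.
  apply: le_trans (a1 x Xx) _; rewrite EFinD [l1%:E + _]addeC addeA.
  by apply: leeD => //; exact: a2.
apply: le_trans (b2 x Xx) _; rewrite EFinD addeA.
by apply: leeD => //; exact: b1.
Qed.

End Ops.

Section Step.
Context {R : realType} {n mm p q : nat} (X : set 'rV[R]_n) (U : set 'rV[R]_mm)
  (ell : 'rV[R]_n -> 'rV[R]_mm -> R) (f : 'rV[R]_n -> 'rV[R]_mm -> 'rV[R]_n)
  (w : 'I_p -> 'rV[R]_n -> \bar R) (z : 'I_q -> 'rV[R]_n -> \bar R).
Local Open Scope ereal_scope.

Lemma eq_ub (a b : \bar R) : (forall m, a <= m <-> b <= m) -> a = b.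
Proof.
move=> H; apply/le_anti/andP; split; first by apply/H.
by apply/H.
Qed.

Lemma S_Wop t (la : 'I_p -> \bar R) x :
  S X U ell f t (Wop w la) x =
  ereal_sup [set S X U ell f t (w i) x + la i | i in [set: 'I_p]].
Proof.
apply: eq_ub => M; split.
- move/supP=> H; apply/supP => _ [i _ <-]; apply/supDrP => _ [u [y [adm ->]]].
  rewrite -addeA; have := H _ (ex_intro _ u (ex_intro _ y (conj adm erefl))).
  by move/supDP; apply; exists i.
- move/supP=> H; apply/supP => _ [u [y [adm ->]]]; apply/supDP => _ [i _ <-].
  rewrite addeA; have := H _ (ex_intro2 _ _ i I erefl).
  by move/supDrP; apply; exists u, y.
Qed.

Lemma pairing_sup (zz : 'rV[R]_n -> \bar R) (G : 'I_p -> 'rV[R]_n -> \bar R)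
  (la : 'I_p -> \bar R) :
  pairing X zz (fun x => ereal_sup [set G i x + la i | i in [set: 'I_p]]) =
  ereal_sup [set pairing X zz (G i) + la i | i in [set: 'I_p]].
Proof.
apply: eq_ub => M; split.
- move/supP=> H; apply/supP => _ [i _ <-]; apply/supDrP => _ [x Xx <-].
  rewrite -addeA; have := H _ (ex_intro2 _ _ x Xx erefl).
  by move/supDP; apply; exists i.
- move/supP=> H; apply/supP => _ [x Xx <-]; apply/supDP => _ [i _ <-].
  rewrite addeA; have := H _ (ex_intro2 _ _ i I erefl).
  by move/supDrP; apply; exists x.
Qed.

Lemma mpfem_step t (la : 'I_p -> \bar R) :
  mxres (fun j i => pairing X (z j) (w i))
    (mxact (fun j i => pairing X (z j) (S X U ell f t (w i))) la) =
  Wres X w (PZ X z (S X U ell f t (Wop w la))).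
Proof.
have Hmu : forall j, mxact (fun j i => pairing X (z j) (S X U ell f t (w i))) la j
    = pairing X (z j) (S X U ell f t (Wop w la)).
  move=> j; rewrite /mxact.
  have -> : S X U ell f t (Wop w la) =
     (fun x => ereal_sup [set S X U ell f t (w i) x + la i | i in [set: 'I_p]]).
    by apply: funext => x; exact: S_Wop.
  by rewrite pairing_sup.
apply: funext => i; apply: eq_lb => M; rewrite /mxres /Wres; split.
- move/infP=> H; apply/infP => _ [x Xx <-]; apply/residP; apply/infP => _ [j _ <-].
  apply/residP; rewrite addeA; have := H _ (ex_intro2 _ _ j I erefl).
  move/residP; rewrite Hmu; apply: le_trans; apply: leeD => //.
  by apply: ereal_sup_ubound; exists x.
- move/infP=> H; apply/infP => _ [j _ <-]; apply/residP; rewrite Hmu; apply/supDrP => _ [x Xx <-].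
  have := H _ (ex_intro2 _ _ x Xx erefl); move/residP/infP.
  move/(_ _ (ex_intro2 _ _ j I erefl))/residP.
  by rewrite addeA.
Qed.

Lemma mpfem_coeffsS t phi k :
  mpfem_coeffs X U ell f t phi w z k.+1 =
  Wres X w (PZ X z (S X U ell f t (Wop w (mpfem_coeffs X U ell f t phi w z k)))).
Proof. by rewrite /= mpfem_step. Qed.

End Step.

Section Meas.
Context {R : realType}.
Notation mu := (@lebesgue_measure R).

Lemma test_lra (x s t : R) : 0 <= s -> 0 <= t -> (0 <= x <= s + t) -> (x <= s) || (s < x).
Proof. move=> s0 t0 /andP[x0 xst]. case: (lerP x s) => //. Qed.

Lemma test_lra2 (x s t : R) : 0 <= s -> (x < s) -> x - 1 < s + t + 2 -> x <= s + t + 5.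
Proof. move=> ? ? ?. lra. Qed.

Lemma msh (c : R) : measurable_fun [set: measurableTypeR R] (fun x : measurableTypeR R => (x + c)%R : measurableTypeR R).
Proof. by apply: measurable_realfun.measurable_funD => //; exact: measurable_id. Qed.


Definition pm (c : R) := measure_function_pushforward__canonical__measure_function_Measure mu (msh c).

Lemma preimage_oc (a b c : R) :
  (fun x : R => x + c) @^-1` `]a, b]%classic = `]a - c, b - c]%classic.
Proof.
apply/seteqP; split => x /=; rewrite !in_itv /= => /andP[h1 h2]; apply/andP; split; lra.
Qed.

Lemma leb_shift (c : R) (A : set R) : measurable (A : set (measurableTypeR R)) ->
  mu A = mu ((fun x : R => x + c) @^-1` A).
Proof.
move=> mA; have := @lebesgue_measure_unique R (pm c) _ A mA; apply.
move=> _ [[a b] _ <-] /=.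
rewrite /pm /= /pushforward preimage_oc !lebesgue_measure_itv /= !lte_fin.
have -> : (a - c < b - c) = (a < b) by rewrite ltrBlDr subrK.
case: ifP => // _; rewrite -!EFinD; congr (_%:E); lra.
Qed.


Local Open Scope ereal_scope.
Lemma integral_shift (c : R) (D : set R) (h : R -> \bar R) :
  measurable (D : set (measurableTypeR R)) -> measurable_fun D h ->
  \int[mu]_(x in D) h x = \int[mu]_(x in (fun x : R => (x + c)%R) @^-1` D) h (x + c)%R.
Proof.
move=> mD mh.
rewrite (eq_measure_integral (pm c)); last by move=> A mA _; exact: leb_shift.
rewrite integralE [RHS]integralE.
have h1 := @ge0_integral_pushforward _ _ _ _ R _ (msh c) mu D (h^\+) mD
  (measurable_funepos mh) (fun x _ => funepos_ge0 h x).
have h2 := @ge0_integral_pushforward _ _ _ _ R _ (msh c) mu D (h^\-) mD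
  (measurable_funeneg mh) (fun x _ => funeneg_ge0 h x).
rewrite /pm /=.
rewrite h1 h2; congr (_ - _); by apply: eq_integral => x _; rewrite /= ?funeposE ?funenegE.
Qed.


Local Close Scope ereal_scope.
Lemma ae_shift (c : R) (P : R -> Prop) :
  {ae mu, forall x, P x} -> {ae mu, forall x, P (x + c)%R}.
Proof.
move=> [A [mA A0 sub]]; exists ((fun x : R => (x + c)%R) @^-1` A); split.
- by rewrite -[X in measurable X]setTI; apply: (msh c).
- by rewrite -leb_shift.
- by move=> x /= nP; apply: sub.
Qed.

Lemma aeS (P Q : R -> Prop) : (forall x, P x -> Q x) ->
  {ae mu, forall x, P x} -> {ae mu, forall x, Q x}.
Proof.
move=> PQ [A [mA A0 sub]]; exists A; split => // x /= nQ; apply: sub => /= hP.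
by apply: nQ; exact: PQ.
Qed.

Lemma aeI (P Q : R -> Prop) :
  {ae mu, forall x, P x} -> {ae mu, forall x, Q x} -> {ae mu, forall x, P x /\ Q x}.
Proof.
move=> hP hQ; have := negligibleU hP hQ.
by apply: negligibleS => x /= H; apply/not_andP.
Qed.

Lemma ae_neq (s : R) : {ae mu, forall x, x != s}.
Proof.
exists [set s]; split => //; first exact: lebesgue_measure_set1.
by move=> x /= /negP; rewrite negbK => /eqP.
Qed.

Lemma mfun_shift (D E : set R) (c : R) (h : R -> R) :
  measurable (D : set (measurableTypeR R)) -> measurable (E : set (measurableTypeR R)) ->
  (forall x, E x -> D (x + c)%R) ->
  measurable_fun D h -> measurable_fun E (fun x => h (x + c)%R).
Proof.
move=> mD mE ED mh.
apply: (@measurable_comp _ _ _ _ _ _ D h E (fun x : R => (x + c)%R)) => //.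
  by move=> _ [x Ex <-]; exact: ED.
exact: measurable_funS (msh c).
Qed.

Lemma mfun_shiftE (D E : set R) (c : R) (h : R -> \bar R) :
  measurable (D : set (measurableTypeR R)) -> measurable (E : set (measurableTypeR R)) ->
  (forall x, E x -> D (x + c)%R) ->
  measurable_fun D h -> measurable_fun E (fun x => h (x + c)%R).
Proof.
move=> mD mE ED mh.
apply: (@measurable_comp _ _ _ _ _ _ D h E (fun x : R => (x + c)%R)) => //.
  by move=> _ [x Ex <-]; exact: ED.
exact: measurable_funS (msh c).
Qed.

Lemma itv_split (s t : R) : (0 <= s)%R -> (0 <= t)%R ->
  `[0, s + t]%classic = `[0, s]%classic `|` `]s, s + t]%classic.
Proof.
move=> s0 t0; apply/seteqP; split => x /=; rewrite !in_itv /=.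
  by move=> /andP[h1 h2]; case: (lerP x s) => h3; [left|right]; apply/andP; split.
by case=> /andP[h1 h2]; apply/andP; split; lra.
Qed.

Lemma mfun_concat (s t : R) (h1 h2 : R -> R) : (0 <= s)%R -> (0 <= t)%R ->
  measurable_fun `[0, s]%classic h1 -> measurable_fun `[0, t]%classic h2 ->
  measurable_fun `[0, s + t]%classic (fun r => if (r <= s)%R then h1 r else h2 (r - s)%R).
Proof.
move=> s0 t0 m1 m2; rewrite itv_split //; apply/measurable_funU => //; split.
  apply: eq_measurable_fun m1 => x; rewrite inE /= in_itv /= => /andP[_ ->] //.
have : measurable_fun `]s, s + t]%classic (fun x => h2 (x + - s)%R).
  apply: mfun_shift m2 => //; move=> x /=; rewrite !in_itv /= => /andP[h1' h2'].
  by apply/andP; split; lra.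
apply: eq_measurable_fun => x; rewrite inE /= in_itv /= => /andP[h h'].
by rewrite leNgt h.
Qed.

Lemma run_split (s t : R) (h : R -> R) : (0 <= s)%R -> (0 <= t)%R ->
  measurable_fun `[0, s + t]%classic h ->
  (\int[mu]_(r in `[0%R, (s + t)%R]) (h r)%:E =
  \int[mu]_(r in `[0%R, s]) (h r)%:E + \int[mu]_(r in `[0%R, t]) (h (r + s)%R)%:E)%E.
Proof.
move=> s0 t0 mh.
rewrite itv_split // integral_setU //; last 2 first.
- by rewrite -itv_split //; apply/measurable_EFinP.
- apply/disj_setPS => x [] /=; rewrite !in_itv /= => /andP[_ h1] /andP[h2 _].
  by move: (lt_le_trans h2 h1); rewrite ltxx.
congr (_ + _).
rewrite [LHS](integral_shift s) //; last first.
  apply/measurable_EFinP; apply: (@measurable_funS _ _ _ _ `[0, s + t]%classic) mh => //.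
  by rewrite itv_split //; exact: subsetUr.
have -> : (fun x : R => (x + s)%R) @^-1` `]s, s + t]%classic = `]0, t]%classic.
  apply/seteqP; split => x /=; rewrite !in_itv /= => /andP[h1 h2]; apply/andP; split; lra.
apply: integral_itv_obnd_cbnd.
apply/measurable_EFinP; apply: (mfun_shift (D := `[0, s + t]%classic)) => //.
move=> x /=; rewrite !in_itv /= => /andP[h1 h2]; apply/andP; split; lra.
Qed.

End Meas.

Definition concat {R : realType} {T : Type} (s : R) (g1 g2 : R -> T) :=
  fun r => if r <= s then g1 r else g2 (r - s).

Section AC.
Context {R : realType} {n : nat}.
Implicit Types (y : R -> 'rV[R]_n).

Lemma ac_restr y s t : 0 <= t -> abs_cont_on y (s + t) -> abs_cont_on y s.
Proof.
move=> t0 H e e0; have [d d0 Hd] := H e e0; exists d => // K a b H1 H2 H3.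
apply: Hd => // k kK; have [? [? ?]] := H1 k kK; split => //; split => //; lra.
Qed.

Lemma ac_shift y s t : 0 <= s -> abs_cont_on y (s + t) ->
  abs_cont_on (fun r => y (r + s)) t.
Proof.
move=> s0 H e e0; have [d d0 Hd] := H e e0; exists d => // K a b H1 H2 H3.
apply: (Hd K (fun k => a k + s) (fun k => b k + s)).
- by move=> k kK; have [? [? ?]] := H1 k kK; split; [|split]; lra.
- by move=> k kK; have := H2 k kK; lra.
- apply: le_lt_trans H3; rewrite le_eqVlt; apply/orP; left; apply/eqP.
  by apply: eq_bigr => k _; lra.
Qed.

Lemma ac_key y1 y2 (s a b : R) : y1 s = y2 0 -> a <= b ->
  `|concat s y1 y2 b - concat s y1 y2 a| <= `|y1 (Num.min b s) - y1 (Num.min a s)| +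
                  `|y2 (Num.max b s - s) - y2 (Num.max a s - s)|.
Proof.
move=> e12 ab; rewrite /concat !minEle !maxEle.
case: (lerP b s) => bs.
  have as_ : a <= s by apply: le_trans bs.
  by rewrite as_ !subrr normr0 addr0.
case: (lerP a s) => as_.
  rewrite subrr -e12.
  have -> : y2 (b - s) - y1 a = (y1 s - y1 a) + (y2 (b - s) - y1 s).
    by rewrite [RHS]addrC addrA subrK.
  exact: ler_normD.
by rewrite subrr normr0 add0r.
Qed.

Lemma ac_concat y1 y2 (s t : R) : 0 <= s -> 0 <= t -> y1 s = y2 0 ->
  abs_cont_on y1 s -> abs_cont_on y2 t ->
  abs_cont_on (concat s y1 y2) (s + t).
Proof.
move=> s0 t0 e12 H1 H2 e e0.
have e2 : 0 < e / 2 by rewrite divr_gt0.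
have [d1 d10 Hd1] := H1 _ e2; have [d2 d20 Hd2] := H2 _ e2.
exists (Num.min d1 d2); first by rewrite lt_min d10 d20.
move=> K a b Hab Hord Hsum.
have S1 := Hd1 K (fun k => Num.min (a k) s) (fun k => Num.min (b k) s).
have S2 := Hd2 K (fun k => Num.max (a k) s - s) (fun k => Num.max (b k) s - s).
have Hle : \sum_(k < K) (b k - a k) < d1 /\ \sum_(k < K) (b k - a k) < d2.
  by move: Hsum; rewrite lt_min => /andP[].
case: Hle => Hl1 Hl2.
have {S1}S1 : \sum_(k < K) `|y1 (Num.min (b k) s) - y1 (Num.min (a k) s)| < e / 2.
  apply: S1.
  - move=> k kK; have [? [? ?]] := Hab k kK; rewrite !minEle.
    by case: ifP => ?; case: ifP => ?; split; try split; lra.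
  - move=> k kK; have := Hord k kK; have [? [? ?]] := Hab k (ltnW kK).
    have [? [? ?]] := Hab k.+1 kK; rewrite !minEle.
    by case: ifP => ?; case: ifP => ?; lra.
  - apply: le_lt_trans Hl1; apply: ler_sum => k _.
    have [? [? ?]] := Hab k (ltn_ord k); rewrite !minEle.
    by case: ifP => ?; case: ifP => ?; lra.
have {S2}S2 : \sum_(k < K) `|y2 (Num.max (b k) s - s) - y2 (Num.max (a k) s - s)| < e / 2.
  apply: S2.
  - move=> k kK; have [? [? ?]] := Hab k kK; rewrite !maxEle.
    by case: ifP => ?; case: ifP => ?; split; try split; lra.
  - move=> k kK; have := Hord k kK; have [? [? ?]] := Hab k (ltnW kK).
    have [? [? ?]] := Hab k.+1 kK; rewrite !maxEle.
    by case: ifP => ?; case: ifP => ?; lra.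
  - apply: le_lt_trans Hl2; apply: ler_sum => k _.
    have [? [? ?]] := Hab k (ltn_ord k); rewrite !maxEle.
    by case: ifP => ?; case: ifP => ?; lra.
rewrite [e]splitr; apply: le_lt_trans (ltrD S1 S2).
rewrite -big_split /=; apply: ler_sum => k _.
have [? [? ?]] := Hab k (ltn_ord k).
by apply: ac_key.
Qed.

End AC.

Section Der.
Context {R : realType} {V : normedModType R}.

Lemma derivable_shift (y : R -> V) (r c : R) : derivable y (r + c) 1 ->
  derivable (fun x => y (x + c)) r 1 /\ 'D_1 (fun x => y (x + c)) r = 'D_1 y (r + c).
Proof.
have E : (fun h : R => h^-1 *: (((fun x => y (x + c)) \o shift r) (h *: 1) - y (r + c))) =
         (fun h : R => h^-1 *: ((y \o shift (r + c)) (h *: 1) - y (r + c))).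
  by apply: funext => h; rewrite /= addrA.
by rewrite /derivable /derive E.
Qed.

End Der.

Section Adm.
Context {R : realType} {n m : nat} (X : set 'rV[R]_n) (U : set 'rV[R]_m)
  (ell : 'rV[R]_n -> 'rV[R]_m -> R) (f : 'rV[R]_n -> 'rV[R]_m -> 'rV[R]_n).
Notation mu := (@lebesgue_measure R).

Lemma adm_split s t x u y : 0 <= s -> 0 <= t ->
  admissible X U ell f (s + t) x u y ->
  [/\ admissible X U ell f s x u y,
      admissible X U ell f t (y s) (fun r => u (r + s)) (fun r => y (r + s)) &
      run_cost ell (s + t) u y =
      (run_cost ell s u y + run_cost ell t (fun r => u (r + s)%R) (fun r => y (r + s)%R))%E].
Proof.
move=> s0 t0 [HU [Hm [HX [Hac [Hd [H0 Hme]]]]]].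
have sub1 : forall r, `[0, s]%classic r -> `[0, s + t]%classic r.
  by move=> r /=; rewrite !in_itv /= => /andP[? ?]; apply/andP; split; lra.
have sub2 : forall r, `[0, t]%classic r -> `[0, s + t]%classic (r + s).
  by move=> r /=; rewrite !in_itv /= => /andP[? ?]; apply/andP; split; lra.
split.
- split; first by move=> r /sub1; exact: HU.
  split; first by move=> i; apply: (@measurable_funS _ _ _ _ `[0, s + t]%classic) (Hm i) => //; exact: sub1.
  split; first by move=> r /sub1; exact: HX.
  split; first exact: ac_restr Hac.
  split.
    apply: aeS Hd => r H hr; apply: H; move: hr => /=; rewrite !in_itv /=.
    by move=> /andP[? ?]; apply/andP; split; lra.
  split => //.
  by apply: (@measurable_funS _ _ _ _ `[0, s + t]%classic) Hme => //; exact: sub1.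
- split; first by move=> r /sub2; exact: HU.
  split.
    move=> i; apply: (@mfun_shift R `[0, s + t]%classic `[0, t]%classic s (fun r => u r ord0 i)) => //.
  split; first by move=> r /sub2; exact: HX.
  split; first exact: ac_shift Hac.
  split.
    apply: aeS (ae_shift s Hd) => r H hr.
    have hr' : `]0, s + t[%classic (r + s).
      by move: hr => /=; rewrite !in_itv /= => /andP[? ?]; apply/andP; split; lra.
    have [D1 D2] := H hr'.
    have [D3 D4] := derivable_shift D1.
    by split => //; rewrite D4 D2.
  split; first by rewrite add0r.
  exact: (@mfun_shift R `[0, s + t]%classic `[0, t]%classic s (fun r => ell (y r) (u r))).
- exact: run_split.
Qed.


Lemma adm_concat s t x u1 y1 u2 y2 : 0 <= s -> 0 <= t ->
  admissible X U ell f s x u1 y1 ->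
  admissible X U ell f t (y1 s) u2 y2 ->
  [/\ admissible X U ell f (s + t) x (concat s u1 u2) (concat s y1 y2),
      run_cost ell (s + t) (concat s u1 u2) (concat s y1 y2) =
      (run_cost ell s u1 y1 + run_cost ell t u2 y2)%E &
      concat s y1 y2 (s + t) = y2 t].
Proof.
move=> s0 t0 [HU1 [Hm1 [HX1 [Hac1 [Hd1 [H01 Hme1]]]]]]
  [HU2 [Hm2 [HX2 [Hac2 [Hd2 [H02 Hme2]]]]]].
have cases : forall r, `[0, s + t]%classic r ->
    (r <= s /\ `[0, s]%classic r) \/ (s < r /\ `[0, t]%classic (r - s)).
  move=> r /=; rewrite !in_itv /= => /andP[? ?].
  case: (lerP r s) => rs; [left|right]; split => //; apply/andP; split; lra.
have Hme : measurable_fun `[0, s + t]%classic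
    (fun r => ell (concat s y1 y2 r) (concat s u1 u2 r)).
  have -> : (fun r => ell (concat s y1 y2 r) (concat s u1 u2 r)) =
     (fun r => if r <= s then ell (y1 r) (u1 r) else ell (y2 (r - s)) (u2 (r - s))).
    by apply: funext => r; rewrite /concat; case: ifP.
  exact: (@mfun_concat R s t (fun r => ell (y1 r) (u1 r)) (fun r => ell (y2 r) (u2 r)) s0 t0 Hme1 Hme2).
split.
- split.
    move=> r /cases [[rs hr]|[rs hr]]; rewrite /concat.
      by rewrite rs; apply: HU1.
    by rewrite leNgt rs /=; apply: HU2.
  split.
    move=> i.
    have -> : (fun r => concat s u1 u2 r ord0 i) =
       (fun r => if r <= s then u1 r ord0 i else u2 (r - s) ord0 i).
      by apply: funext => r; rewrite /concat; case: ifP.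
    exact: (@mfun_concat R s t (fun r => u1 r ord0 i) (fun r => u2 r ord0 i) s0 t0 (Hm1 i) (Hm2 i)).
  split.
    move=> r /cases [[rs hr]|[rs hr]]; rewrite /concat.
      by rewrite rs; apply: HX1.
    by rewrite leNgt rs /=; apply: HX2.
  split; first by apply: ac_concat.
  split.
    have A := aeI Hd1 (aeI (ae_shift (- s) Hd2) (ae_neq s)).
    apply: aeS A => r [D1 [D2 D3]] hr.
    move: hr => /=; rewrite in_itv /= => /andP[r0 rst].
    case: (ltgtP r s) D3 => //= rs _.
    + have [E1 E2] : derivable y1 r 1 /\ 'D_1 y1 r = f (y1 r) (u1 r).
        by apply: D1; rewrite /= in_itv /= r0 rs.
      have near1 : \forall x \near r, y1 x = concat s y1 y2 x.
        by apply: filterS (lt_nbhsl rs) => z xs; rewrite /concat (ltW xs).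
      split; first exact: near_eq_derivable near1 E1.
      rewrite -(near_eq_derive _ near1) E2 /concat (ltW rs) //.
    + have [E1 E2] : derivable y2 (r + - s) 1 /\ 'D_1 y2 (r + - s) = f (y2 (r + - s)) (u2 (r + - s)).
        by apply: D2; rewrite /= in_itv /=; apply/andP; split; lra.
      have [E3 E4] := derivable_shift E1.
      have near1 : \forall x \near r, y2 (x + - s) = concat s y1 y2 x.
        by apply: filterS (lt_nbhsr rs) => z xs; rewrite /concat leNgt xs.
      split; first exact: near_eq_derivable near1 E3.
      rewrite -(near_eq_derive _ near1) E4 E2 /concat leNgt rs //.
  split; first by rewrite /concat s0.
  exact: Hme.
- rewrite /run_cost run_split //.
  congr (_ + _)%E.
    apply: eq_integral => r; rewrite inE /= in_itv /= => /andP[_ rs].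
    by rewrite /concat rs.
  rewrite -integral_itv_obnd_cbnd; last first.
    apply/measurable_EFinP.
    apply: (@mfun_shift R `[0, s + t]%classic `]0, t]%classic s
      (fun r => ell (concat s y1 y2 r) (concat s u1 u2 r))) => //.
    by move=> r /=; rewrite !in_itv /= => /andP[? ?]; apply/andP; split; lra.
  rewrite -[RHS]integral_itv_obnd_cbnd; last first.
    apply/measurable_EFinP.
    apply: (@measurable_funS _ _ _ _ `[0, t]%classic) Hme2 => //.
    by move=> r /=; rewrite !in_itv /= => /andP[? ?]; apply/andP; split; lra.
  apply: eq_integral => r; rewrite inE /= in_itv /= => /andP[r0 _].
  rewrite /concat; have -> : (r + s <= s) = false by apply/negbTE; rewrite -ltNge; lra.
  by rewrite addrK.
- rewrite /concat; case: ifP => h.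
    have -> : t = 0 by lra.
    by rewrite addr0 H02.
  by have -> : s + t - s = t by lra.
Qed.

End Adm.

Section DPP.
Context {R : realType} {n m : nat} (X : set 'rV[R]_n) (U : set 'rV[R]_m)
  (ell : 'rV[R]_n -> 'rV[R]_m -> R) (f : 'rV[R]_n -> 'rV[R]_m -> 'rV[R]_n).

Lemma DPP s t g x : 0 <= s -> 0 <= t ->
  S X U ell f (s + t) g x = S X U ell f s (S X U ell f t g) x.
Proof.
move=> s0 t0; apply: eq_ub => M; split.
- move/supP => H; apply/supP => _ [u1 [y1 [adm1 ->]]].
  apply/supDP => _ [u2 [y2 [adm2 ->]]].
  have [admc runc endc] := adm_concat s0 t0 adm1 adm2.
  rewrite addeA -runc -endc; apply: H.
  by exists (concat s u1 u2), (concat s y1 y2).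
- move/supP => H; apply/supP => _ [u [y [adm ->]]].
  have [a1 a2 run] := adm_split s0 t0 adm.
  rewrite run -addeA.
  apply: le_trans (H (run_cost ell s u y + S X U ell f t g (y s))%E _); last first.
    by exists u, y.
  apply: leeD => //; apply: ereal_sup_ubound.
  exists (fun r => u (r + s)), (fun r => y (r + s)); split => //.
  by rewrite [(t + s)%R]addrC.
Qed.


Lemma run0 u y : run_cost ell 0 u y = 0%E.
Proof.
rewrite /run_cost.
have -> : `[0, 0]%classic = [set (0:R)].
  apply/seteqP; split => r /=; rewrite ?in_itv /=.
    by move=> /andP[h1 h2]; apply/eqP; rewrite eq_le h1 h2.
  by move=> ->; rewrite lexx.
exact: integral_set1.
Qed.

Lemma S0 g x : (exists u0, U u0) -> X x -> S X U ell f 0 g x = g x.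
Proof.
move=> [u0 Hu0] Xx; apply/le_anti/andP; split.
  apply/supP => _ [u [y [[_ [_ [_ [_ [_ [H0 _]]]]]] ->]]].
  by rewrite run0 add0e H0.
apply: ereal_sup_ubound; exists (fun _ => u0), (fun _ => x); split; last first.
  by rewrite run0 add0e.
split; first by [].
split; first by move=> i; exact: measurable_cst.
split; first by [].
split.
  move=> e e0; exists 1 => // K a b _ _ _.
  by rewrite big1 // => k _; rewrite subrr normr0.
split.
  apply: aeW => r /=; rewrite in_itv /= => /andP[h1 h2].
  by exfalso; move: (lt_trans h1 h2); rewrite ltxx.
split => //.
Qed.

Lemma S_noU t g x : ~ (exists u0, U u0) -> 0 <= t -> S X U ell f t g x = -oo%E.
Proof.
move=> NU t0; apply/eqP; rewrite -leeNy_eq; apply/supP => a [u [y [[HU _] _]]].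
exfalso; apply: NU; exists (u 0); apply: HU.
by rewrite /= in_itv /= lexx t0.
Qed.

End DPP.

End Aux.
Import Aux.

Theorem corollary5p3 (R : realType) (n m p q : nat)
  (X : set 'rV[R]_n) (U : set 'rV[R]_m)
  (ell : 'rV[R]_n -> 'rV[R]_m -> R) (f : 'rV[R]_n -> 'rV[R]_m -> 'rV[R]_n)
  (T : R) (phi : 'rV[R]_n -> \bar R)
  (w : 'I_p -> 'rV[R]_n -> \bar R) (z : 'I_q -> 'rV[R]_n -> \bar R)
  (N : nat) :
  0 < T -> (1 <= N)%N -> (0 < p)%N -> (0 < q)%N ->
  (forall x, X x -> phi x != +oo%E) ->
  (forall i x, X x -> w i x != +oo%E) ->
  (forall j x, X x -> z j x != +oo%E) ->
  let delta := T / N%:R in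
  let v := fun t : R => S X U ell f t phi in
  let vh := Wop w (mpfem_coeffs X U ell f delta phi w z N) in
  (supnorm X vh (v T) <=
     ((1 + T / delta)%:E *
      ereal_sup [set (supnorm X (PZ X z (v (k%:R * delta)%R)) (v (k%:R * delta)%R)
                      + supnorm X (PW X w (v (k%:R * delta)%R)) (v (k%:R * delta)%R))%E
                 | k in [set k : nat | (k <= N)%N]]))%E.
Proof.
move=> T0 N1 _ _ _ _ _; cbv zeta.
set delta := T / N%:R.
set v := (fun t : R => S X U ell f t phi).
have N0 : N%:R != 0 :> R by rewrite pnatr_eq0 -lt0n.
have d0 : 0 <= delta by rewrite /delta divr_ge0 // ltW.
set E := fun k : nat => (supnorm X (PZ X z (v (k%:R * delta)%R)) (v (k%:R * delta)%R)
                      + supnorm X (PW X w (v (k%:R * delta)%R)) (v (k%:R * delta)%R))%E.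
set sup := ereal_sup _.
have hE : forall k, (k <= N)%N -> (E k <= sup)%E.
  by move=> k kN; apply: ereal_sup_ubound; exists k.
have E0 : forall k, (0 <= E k)%E by move=> k; apply: adde_ge0; exact: supnorm_ge0.
have sup0 : (0 <= sup)%E by apply: le_trans (E0 0%N) (hE 0%N (leq0n _)).
pose F := fun g => PW X w (PZ X z (S X U ell f delta g)).
have closeF : forall g h l, close X g h l -> close X (F g) (F h) l.
  move=> g h l [c1 c2]; split => x Xx.
  - by apply: PW_le => y Xy; apply: PZ_le => y' Xy'; apply: S_le.
  - by apply: PW_le => y Xy; apply: PZ_le => y' Xy'; apply: S_le.
have PWPZ : forall g, (supnorm X (PW X w (PZ X z g)) g <= 
    supnorm X (PZ X z g) g + supnorm X (PW X w g) g)%E.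
  move=> g; apply: supnorm_le2 => l1 l2 l10 l20 [a1 a2] c2.
  apply: close_tri c2; split => x Xx; apply: PW_le => //.
pose c := fun k => mpfem_coeffs X U ell f delta phi w z k.
have cS : forall k, Wop w (c k.+1) = F (Wop w (c k)).
  by move=> k; rewrite /c mpfem_coeffsS.
have vS : forall k : nat, v (k.+1%:R * delta) = S X U ell f delta (v (k%:R * delta)).
  move=> k; apply: funext => x; rewrite /v /= -DPP //; last by rewrite mulr_ge0.
  by congr S; rewrite -natr1 mulrDl mul1r addrC.
have step : forall k : nat, (supnorm X (Wop w (c k.+1)) (v (k.+1%:R * delta)%R) <=
    supnorm X (Wop w (c k)) (v (k%:R * delta)%R) + E k.+1)%E.
  move=> k; rewrite cS vS.
  apply: le_trans (supnorm_le2 (X := X) (g := F (Wop w (c k))) (h := S X U ell f delta (v (k%:R * delta)))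
    (g1 := F (Wop w (c k))) (h1 := F (v (k%:R * delta)))
     (g2 := F (v (k%:R * delta))) (h2 := S X U ell f delta (v (k%:R * delta))) _) _.
    by move=> l1 l2 _ _ h1 h2; exact: close_tri h1 h2.
  apply: leeD.
    by apply: supnorm_le1 => l _; exact: closeF.
  by rewrite /E /F -vS; exact: PWPZ.
have base : (supnorm X (Wop w (c 1%N)) (v (1%:R * delta)%R) <= E 0%N + E 1%N)%E.
  rewrite cS vS.
  apply: le_trans (supnorm_le2 (X := X) (g := F (Wop w (c 0%N))) (h := S X U ell f delta (v (0%:R * delta)))
    (g1 := F (Wop w (c 0%N))) (h1 := F (v (0%:R * delta)))
     (g2 := F (v (0%:R * delta))) (h2 := S X U ell f delta (v (0%:R * delta))) _) _.
    by move=> l1 l2 _ _ h1 h2; exact: close_tri h1 h2.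
  apply: leeD; last by rewrite /E /F -vS; exact: PWPZ.
  apply: le_trans (leeDr _ (supnorm_ge0 _ _ _)); rewrite -/v.
  apply: supnorm_le1 => l l0 cl.
  have [[u0 Hu0]|NU] := pselect (exists u0, U u0).
    have -> : Wop w (c 0%N) = PW X w (v (0%:R * delta)).
      rewrite /PW /c /=; congr Wop; apply: funext => i; rewrite /Wres.
      congr ereal_inf; apply/seteqP; split => _ [x Xx <-]; exists x => //.
        by rewrite /v /= mul0r S0 //; exists u0.
      by rewrite /v /= mul0r S0 //; exists u0.
    exact: closeF.
  have SE : forall g, S X U ell f delta g = fun _ => (-oo)%E.
    by move=> g; apply: funext => x; rewrite S_noU.
  rewrite /F !SE; split => x Xx; apply: leeDl; rewrite lee_fin.
  1,2: exact: l0.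
have main : forall k, (1 <= k <= N)%N ->
    (supnorm X (Wop w (c k)) (v (k%:R * delta)%R) <= k.+1%:R%:E * sup)%E.
  elim => [//|k IH] /andP[k1 kN].
  have [->|kpos] := eqVneq k 0%N.
    apply: le_trans base _.
    rewrite -natr1 EFinD ge0_muleDl // mul1e.
    apply: leeD; last by apply: hE.
    by apply: hE.
  apply: le_trans (step k) _.
  rewrite -[k.+2%:R]natr1 EFinD ge0_muleDl // mul1e.
  apply: leeD; last by apply: hE.
  apply: IH; rewrite lt0n kpos /=; exact: ltnW.
have -> : T / delta = N%:R by rewrite /delta; field; rewrite N0 gt_eqF.
have -> : v T = v (N%:R * delta) by rewrite /delta mulrC divfK.
rewrite addrC natr1.
by apply: main; rewrite N1 leqnn.
Qed.
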